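(* Let $(X,p)$ be a complete partial metric space, let $x_o\in X$, and let $f:X\to X$ be a Cauchy function at $x_o$. If $f$ is non-expansive and weakly orbitally continuous at $x_o$, then $f$ has a fixed point.
   Context: A partial metric on $X$ is $p:X\times X\to\mathbb{R}$ with, for all $x,y,z$: $p(x,x)\le p(x,y)$; $p(x,y)=p(y,x)$; $p(x,x)=p(x,y)=p(y,y)$ iff $x=y$; $p(x,y)\le p(x,z)+p(z,y)-p(z,z)$. The topology on $X$ is generated by the balls $\{y\mid p(x,y)-p(x,x)<\epsilon\}$, so $a$ is a limit of $\{x_i\}$ iff for every $\epsilon>0$ there is $N$ with $p(a,x_i)-p(a,a)<\epsilon$ for all $i>N$. A sequence $\{x_i\}$ is Cauchy with central distance $r\in\mathbb{R}$ if for every $\epsilon>0$ there is $N$ with $|p(x_i,x_j)-r|<\epsilon$ for all $i\ge j>N$. A special limit of such a sequence is a limit $a$ with $p(a,a)=r$. $(X,p)$ is complete if every Cauchy sequence has a special limit. $f$ is a Cauchy function at $x_o$ if the orbit $\{f^i(x_o)\}_{i\in\mathbb{N}}$ ($f^0(x_o)=x_o$, $f^{i+1}(x_o)=f(f^i(x_o))$) is Cauchy. $f$ is non-expansive if $p(f(x),f(y))\le p(x,y)$ for all $x,y$. $f$ is weakly orbitally continuous at $x_o$ if whenever $a$ is a special limit of $\{f^i(x_o)\}$, $f(a)$ is a limit of $\{f^i(x_o)\}$. *)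

(* Defs.v *)
From Stdlib Require Import Reals.
Open Scope R_scope.

Definition is_partial_metric {X : Type} (p : X -> X -> R) : Prop :=
  (forall x y, p x x <= p x y) /\
  (forall x y, p x y = p y x) /\
  (forall x y, (p x x = p x y /\ p x y = p y y) <-> x = y) /\
  (forall x y z, p x y <= p x z + p z y - p z z).

Definition pm_limit {X : Type} (p : X -> X -> R) (u : nat -> X) (a : X) : Prop :=
  forall eps, eps > 0 -> exists N : nat, forall i, (i > N)%nat -> p a (u i) - p a a < eps.

Definition pm_cauchy_with {X : Type} (p : X -> X -> R) (u : nat -> X) (r : R) : Prop :=
  forall eps, eps > 0 -> exists N : nat, forall i j, (i >= j)%nat -> (j > N)%nat ->
    Rabs (p (u i) (u j) - r) < eps.

Definition pm_cauchy {X : Type} (p : X -> X -> R) (u : nat -> X) : Prop :=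
  exists r, pm_cauchy_with p u r.

Definition pm_special_limit {X : Type} (p : X -> X -> R) (u : nat -> X) (a : X) : Prop :=
  exists r, pm_cauchy_with p u r /\ pm_limit p u a /\ p a a = r.

Definition pm_complete {X : Type} (p : X -> X -> R) : Prop :=
  forall u : nat -> X, pm_cauchy p u -> exists a, pm_special_limit p u a.

Fixpoint orbit {X : Type} (f : X -> X) (x0 : X) (i : nat) : X :=
  match i with
  | O => x0
  | S k => f (orbit f x0 k)
  end.

Definition cauchy_function_at {X : Type} (p : X -> X -> R) (f : X -> X) (x0 : X) : Prop :=
  pm_cauchy p (orbit f x0).

Definition non_expansive {X : Type} (p : X -> X -> R) (f : X -> X) : Prop :=
  forall x y, p (f x) (f y) <= p x y.

Definition weakly_orbitally_continuous_at {X : Type} (p : X -> X -> R) (f : X -> X) (x0 : X) : Prop :=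
  forall a, pm_special_limit p (orbit f x0) a -> pm_limit p (orbit f x0) (f a).

(* Main.v *)
Require Import Defs.
From Stdlib Require Import Reals Lra Lia.
Open Scope R_scope.

Lemma le_eps (x y : R) : (forall eps, eps > 0 -> x <= y + eps) -> x <= y.
Proof.
  intros H. destruct (Rle_dec x y) as [h|h]; auto.
  specialize (H ((x - y)/2)). lra.
Qed.

Theorem theorem7p7 (X : Type) (p : X -> X -> R) (x0 : X) (f : X -> X) :
  is_partial_metric p ->
  pm_complete p ->
  cauchy_function_at p f x0 ->
  non_expansive p f ->
  weakly_orbitally_continuous_at p f x0 ->
  exists x, f x = x.
Proof.
  intros [P1 [P2 [P3 P4]]] Hc Hcf Hne Hw.
  destruct (Hc _ Hcf) as [a Ha].
  pose proof (Hw a Ha) as Hfa.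
  destruct Ha as [r [Hcr [Hl Haa]]].
  set (u := orbit f x0) in *.
  assert (K : forall eps, eps > 0 -> exists n : nat,
    Rabs (p (u (S n)) (u (S n)) - r) < eps /\ p a (u n) - r < eps /\
    p a (u (S n)) - r < eps /\ p (f a) (u (S n)) - p (f a) (f a) < eps).
  { intros eps He.
    destruct (Hcr eps He) as [N1 H1]. destruct (Hl eps He) as [N2 H2].
    destruct (Hfa eps He) as [N3 H3].
    exists (S (N1 + N2 + N3)). repeat split.
    - apply H1; lia.
    - rewrite <- Haa. apply H2; lia.
    - rewrite <- Haa. apply H2; lia.
    - apply H3; lia. }
  assert (E1 : p (f a) (f a) = r).
  { apply Rle_antisym; apply le_eps; intros eps He;
      assert (He2 : eps/2 > 0) by lra;
      destruct (K (eps/2) He2) as [n [k1 [k2 [k3 k4]]]].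
    - pose proof (P1 (f a) (u (S n))). pose proof (Hne a (u n)).
      change (u (S n)) with (f (u n)) in *. lra.
    - pose proof (P1 (u (S n)) (f a)). rewrite (P2 (u (S n)) (f a)) in H.
      apply Rabs_def2 in k1. lra. }
  assert (E2 : p a (f a) = r).
  { apply Rle_antisym.
    - apply le_eps; intros eps He.
      destruct (K (eps/3)) as [n [k1 [k2 [k3 k4]]]]; [lra|].
      pose proof (P4 a (f a) (u (S n))). rewrite (P2 (u (S n)) (f a)) in H.
      apply Rabs_def2 in k1. lra.
    - rewrite <- Haa. apply P1. }
  exists a. apply P3. rewrite (P2 (f a) a). lra.
Qed.
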